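(* In every run of the algorithm described in the context, at every time and for all $i,j\in\{1,\dots,n\}$, we have $w\_sync_i[i]\ge w\_sync_j[i]$.
   Context: Model. There are $n$ asynchronous processes $p_1,\dots,p_n$, of which up to $t<n/2$ may crash; a process runs its algorithm correctly until it crashes. Each ordered pair of processes is linked by a reliable (no loss, corruption, duplication or creation), asynchronous, not necessarily FIFO channel. $p_w$ is the single writer, invoking writes sequentially; $v_0$ is the initial value. Messages: $\textsc{write}(b,v)$ with $b\in\{0,1\}$, which stands for the two types $\textsc{write0}(v)$ and $\textsc{write1}(v)$; $\textsc{read}()$; $\textsc{proceed}()$. Variables of $p_i$. These are: $history_i$ with $history_i[0]=v_0$; $w\_sync_i[1..n]$, initially all $0$; $r\_sync_i[1..n]$, initially all $0$. $\mathsf{write}(v)$ by $p_w$: $wsn\gets w\_sync_w[w]+1$; $w\_sync_w[w]\gets wsn$; $history_w[wsn]\gets v$. Send $\textsc{write}(wsn\bmod 2,v)$ to each $p_j$ with $w\_sync_w[j]=wsn-1$. Wait until at least $n-t$ indices $j$ have $w\_sync_w[j]=wsn$. Return. $\mathsf{read}()$ by $p_i$: $r\_sync_i[i]\gets r\_sync_i[i]+1$ and call the new value $rsn$. Send $\textsc{read}()$ to all $p_j$ with $j\ne i$. Wait until at least $n-t$ indices $j$ have $r\_sync_i[j]=rsn$. Let $sn\gets w\_sync_i[i]$. Wait until at least $n-t$ indices $j$ have $w\_sync_i[j]\ge sn$. Return $history_i[sn]$. On receipt of $\textsc{write}(b,v)$ from $p_j$ at $p_i$: Wait until $b=(w\_sync_i[j]+1)\bmod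 2$. Let $wsn\gets w\_sync_i[j]+1$. If $wsn=w\_sync_i[i]+1$, then set $w\_sync_i[i]\gets wsn$ and $history_i[wsn]\gets v$, and send $\textsc{write}(wsn\bmod 2,v)$ to each $p_\ell$ with $w\_sync_i[\ell]=wsn-1$. Else, if $wsn<w\_sync_i[i]$, send $\textsc{write}((wsn+1)\bmod 2,history_i[wsn+1])$ to $p_j$. Finally set $w\_sync_i[j]\gets wsn$. On receipt of $\textsc{read}()$ from $p_j$ at $p_i$: Let $sn\gets w\_sync_i[i]$; wait until $w\_sync_i[j]\ge sn$; send $\textsc{proceed}()$ to $p_j$. On receipt of $\textsc{proceed}()$ from $p_j$ at $p_i$: $r\_sync_i[j]\gets r\_sync_i[j]+1$. Message handlers run concurrently; a waiting handler does not block the reception of other messages. *)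

(* Defs.v *)
From mathcomp Require Import all_boot.
Set Implicit Arguments.
Unset Strict Implicit.
Unset Printing Implicit Defensive.

(* Message payloads: WRITE(b,v) with b = true standing for WRITE1 (odd sequence
   number) and b = false for WRITE0; READ(); PROCEED(). *)
Inductive payload (V : Type) : Type :=
| MWrite of bool & V
| MRead
| MProceed.
Arguments MRead {V}.
Arguments MProceed {V}.

Inductive opstatus : Type :=
| Idle
| OpWrite of nat     (* waiting in write, with sequence number wsn *)
| OpRead1 of nat     (* waiting for n-t PROCEED, with rsn *)
| OpRead2 of nat.    (* waiting for n-t w_sync >= sn, with sn *)

Section Alg.
Variables (V : Type) (n t : nat) (w : 'I_n) (v0 : V).

Record msg := Msg { src : 'I_n; dst : 'I_n; pay : payload V }.

Record lstate := LState {
  hist : nat -> V;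
  wsync : 'I_n -> nat;
  rsync : 'I_n -> nat;
  op : opstatus;
  wpend : seq ('I_n * bool * V);(* received WRITE messages whose handler waits *)
  rpend : seq ('I_n * nat);     (* received READ handlers waiting: (sender, sn) *)
  crashed : bool }.

Record config := Config { st : 'I_n -> lstate; net : seq msg }.

Definition upd (T : Type) (f : 'I_n -> T) (k : 'I_n) (x : T) : 'I_n -> T :=
  fun l => if l == k then x else f l.
Definition updn (T : Type) (f : nat -> T) (k : nat) (x : T) : nat -> T :=
  fun m => if m == k then x else f m.

Definition bcast (i : 'I_n) (P : pred 'I_n) (p : payload V) : seq msg :=
  [seq Msg i l p | l <- enum 'I_n & P l].

Definition ncrashed (s : 'I_n -> lstate) : nat :=
  count (fun k => crashed (s k)) (enum 'I_n).

Definition init_lstate : lstate :=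
  LState (fun _ => v0) (fun _ => 0) (fun _ => 0) Idle [::] [::] false.

Definition init_config : config := Config (fun _ => init_lstate) [::].

Inductive step : config -> config -> Prop :=
| StCrash s N i :
    ~~ crashed (s i) -> ncrashed s < t ->
    let x := s i in
    step (Config s N)
         (Config (upd s i (LState (hist x) (wsync x) (rsync x) (op x)
                                  (wpend x) (rpend x) true)) N)
| StInvokeWrite s N v :
    let x := s w in
    ~~ crashed x -> op x = Idle ->
    let wsn := (wsync x w).+1 in
    let ws := upd (wsync x) w wsn in
    step (Config s N)
         (Config (upd s w (LState (updn (hist x) wsn v) ws (rsync x)
                                  (OpWrite wsn) (wpend x) (rpend x) false))
                 (N ++ bcast w (fun j => ws j == wsn.-1) (MWrite (odd wsn) v)))
| StReturnWrite s N wsn :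
    let x := s w in
    ~~ crashed x -> op x = OpWrite wsn ->
    n - t <= count (fun j => wsync x j == wsn) (enum 'I_n) ->
    step (Config s N)
         (Config (upd s w (LState (hist x) (wsync x) (rsync x) Idle
                                  (wpend x) (rpend x) false)) N)
| StInvokeRead s N i :
    let x := s i in
    ~~ crashed x -> op x = Idle ->
    let rsn := (rsync x i).+1 in
    step (Config s N)
         (Config (upd s i (LState (hist x) (wsync x) (upd (rsync x) i rsn)
                                  (OpRead1 rsn) (wpend x) (rpend x) false))
                 (N ++ bcast i (fun j => j != i) MRead))
| StReadPhase2 s N i rsn :
    let x := s i in
    ~~ crashed x -> op x = OpRead1 rsn ->
    n - t <= count (fun j => rsync x j == rsn) (enum 'I_n) ->
    step (Config s N)
         (Config (upd s i (LState (hist x) (wsync x) (rsync x)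
                                  (OpRead2 (wsync x i)) (wpend x) (rpend x) false)) N)
| StReturnRead s N i sn :
    let x := s i in
    ~~ crashed x -> op x = OpRead2 sn ->
    n - t <= count (fun j => sn <= wsync x j) (enum 'I_n) ->
    (* the read returns hist x sn *)
    step (Config s N)
         (Config (upd s i (LState (hist x) (wsync x) (rsync x) Idle
                                  (wpend x) (rpend x) false)) N)
| StDeliverWrite s N1 N2 j i b v :
    let x := s i in
    ~~ crashed x ->
    step (Config s (N1 ++ Msg j i (MWrite b v) :: N2))
         (Config (upd s i (LState (hist x) (wsync x) (rsync x) (op x)
                                  (rcons (wpend x) (j, b, v)) (rpend x) false))
                 (N1 ++ N2))
| StDeliverRead s N1 N2 j i :
    let x := s i in
    ~~ crashed x ->
    step (Config s (N1 ++ Msg j i MRead :: N2))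
         (Config (upd s i (LState (hist x) (wsync x) (rsync x) (op x)
                                  (wpend x) (rcons (rpend x) (j, wsync x i)) false))
                 (N1 ++ N2))
| StDeliverProceed s N1 N2 j i :
    let x := s i in
    ~~ crashed x ->
    step (Config s (N1 ++ Msg j i MProceed :: N2))
         (Config (upd s i (LState (hist x) (wsync x) (upd (rsync x) j (rsync x j).+1)
                                  (op x) (wpend x) (rpend x) false))
                 (N1 ++ N2))
| StWriteHandlerAdopt s N i P1 P2 j b v :
    let x := s i in
    ~~ crashed x -> wpend x = P1 ++ (j, b, v) :: P2 ->
    b = odd (wsync x j).+1 ->
    let wsn := (wsync x j).+1 in
    wsn = (wsync x i).+1 ->
    let ws1 := upd (wsync x) i wsn in
    step (Config s N)
         (Config (upd s i (LState (updn (hist x) wsn v) (upd ws1 j wsn) (rsync x)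
                                  (op x) (P1 ++ P2) (rpend x) false))
                 (N ++ bcast i (fun l => ws1 l == wsn.-1) (MWrite (odd wsn) v)))
| StWriteHandlerOther s N i P1 P2 j b v :
    let x := s i in
    ~~ crashed x -> wpend x = P1 ++ (j, b, v) :: P2 ->
    b = odd (wsync x j).+1 ->
    let wsn := (wsync x j).+1 in
    wsn <> (wsync x i).+1 ->
    step (Config s N)
         (Config (upd s i (LState (hist x) (upd (wsync x) j wsn) (rsync x)
                                  (op x) (P1 ++ P2) (rpend x) false))
                 (N ++ (if wsn < wsync x i
                        then [:: Msg i j (MWrite (odd wsn.+1) (hist x wsn.+1))]
                        else [::])))
| StReadHandler s N i P1 P2 j sn :
    let x := s i in
    ~~ crashed x -> rpend x = P1 ++ (j, sn) :: P2 -> sn <= wsync x j ->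
    step (Config s N)
         (Config (upd s i (LState (hist x) (wsync x) (rsync x) (op x)
                                  (wpend x) (P1 ++ P2) false))
                 (N ++ [:: Msg i j MProceed])).

Inductive reachable : config -> Prop :=
| ReachInit : reachable init_config
| ReachStep c c' : reachable c -> step c c' -> reachable c'.

End Alg.

(* Main.v *)
Require Import Defs.
From mathcomp Require Import all_boot zify.
Set Implicit Arguments. Unset Strict Implicit.
Section S.
Variables (V : Type) (n t : nat) (w : 'I_n) (v0 : V).
Definition iw (p : payload V) := if p is MWrite _ _ then true else false.
Definition netc (N : seq (msg V n)) (i j : 'I_n) :=
  count (fun m => (src m == i) && (dst m == j) && iw (pay m)) N.
Lemma netc_bcast k P p i j : netc (bcast k P p) i j = (k == i) && iw p && P j.
Proof.
rewrite /netc /bcast count_map /=.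
rewrite (eq_count (a2 := fun l => (k == i) && iw p && (l == j))); last first.
  by move=> l /=; rewrite andbAC.
case: ((k == i) && iw p) => /=.
- rewrite (count_uniq_mem j) ?filter_uniq ?enum_uniq //.
    by rewrite mem_filter mem_enum andbT.
  by have := enum_uniq 'I_n; rewrite enumT.
- by elim: [seq l <- enum 'I_n | P l].
Qed.
Definition pendc (x : lstate V n) (j : 'I_n) := count (fun e : 'I_n * bool * V => e.1.1 == j) (wpend x).
Definition Inv (c : config V n) :=
  (forall i j, i != j -> wsync (st c j) i + netc (net c) i j + pendc (st c j) i
                = minn (wsync (st c i) j).+1 (wsync (st c i) i)) /\
  (forall i j, wsync (st c i) j <= wsync (st c i) i) /\
  (forall i, netc (net c) i i = 0 /\ pendc (st c i) i = 0).
Lemma netc_cat A B i j : netc (A ++ B) i j = netc A i j + netc B i j.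
Proof. by rewrite /netc count_cat. Qed.
Lemma netc_cons m A i j : netc (m :: A) i j = ((src m == i) && (dst m == j) && iw (pay m)) + netc A i j.
Proof. by []. Qed.
Lemma inv_ext s N s' N' : Inv (Config s N) -> (forall k, wsync (s' k) = wsync (s k)) ->
  (forall k, pendc (s' k) =1 pendc (s k)) -> (forall i j, netc N' i j = netc N i j) ->
  Inv (Config s' N').
Proof.
move=> [HA [HB HC]] E1 E2 E3; split; [|split] => /=.
- by move=> i j ij; rewrite E1 E2 E1 E3; apply: HA.
- by move=> i j; rewrite E1; apply: HB.
- by move=> i; rewrite E2 E3; apply: HC.
Qed.
Ltac easy_case := apply: inv_ext; [eassumption| | |];
  [ move=> l; rewrite /upd; by case: eqP => // ->
  | move=> l m; rewrite /upd; by case: eqP => // ->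
  | move=> a b; rewrite ?netc_cat ?netc_cons ?netc_bcast /= ?andbF /= ?addn0 ?andbF /=; done ].
Ltac cases := repeat (match goal with
 | H : is_true (?x != ?x) |- _ => by rewrite eqxx in H
 | |- context[ ?x == ?x ] => rewrite eqxx
 | |- context[ if (?a < ?b) then _ else _ ] => case: (ltnP a b) => ?
 | |- context[ ?a == ?b ] =>
     let T := type of a in
     match T with
     | nat => case: (@eqP _ a b) => [?|?]
     | _ => let E := fresh "E" in case: (eqVneq a b) => [E|?]; [subst|]
     end
 end; rewrite /=).
Lemma step_inv c c' : Inv c -> step t w c c' -> Inv c'.
Proof.
move=> HI H; destruct H;
  [ easy_case | idtac | easy_case | easy_case | easy_case | easy_case | idtac
  | easy_case | easy_case | idtac | idtac | easy_case ].
move: HI => [HA [HB HC]] /=; rewrite /ws /wsn /x in H H0 *; clear ws wsn x.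
split; [|split].
{ move=> a b ab; have h1 := HA a b ab; have h2 := HB a b; have h3 := HB w b.
  rewrite /upd netc_cat netc_bcast /= /pendc /=.
  rewrite /pendc /= in h1 h2 h3.
  cases; lia. }
{ move=> a b; have h2 := HB a b; have h3 := HB w b; rewrite /= in h2 h3.
  rewrite /upd /=; cases; lia. }
{ move=> a; have [c1 c2] := HC a; rewrite /pendc /= in c1 c2.
  rewrite /upd netc_cat netc_bcast /pendc /=; cases; lia. }
{  move: HI => [HA [HB HC]] /=; rewrite /x in H *; clear x.
 split; [|split].
{ move=> a c ac; have h1 := HA a c ac; rewrite /= netc_cat netc_cons /pendc /= in h1.
  move: h1; rewrite /upd netc_cat /pendc /= -?cats1 ?count_cat /=; cases; rewrite ?count_cat /=; cases; rewrite ?count_cat /=; cases; intros; lia. }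
{ move=> a c; have h2 := HB a c; rewrite /= in h2.
  rewrite /upd /=; cases; lia. }
{ move=> a; have [c1 c2] := HC a; rewrite /pendc /= netc_cat netc_cons in c1 c2.
  move: c1 c2; rewrite /upd netc_cat /pendc /= -?cats1 ?count_cat /=; cases; rewrite ?count_cat /=; cases; intros; lia. }
}
2: {
move: HI => [HA [HB HC]] /=; rewrite /wsn /x in H H0 H1 H2 *; clear wsn x.
have Ei a : count (fun e : 'I_n * bool * V => e.1.1 == a) (wpend (s i)) =
   count (fun e : 'I_n * bool * V => e.1.1 == a) P1 + (j == a) +
   count (fun e : 'I_n * bool * V => e.1.1 == a) P2.
  by rewrite H0 count_cat /= addnA.
have ji : j != i.
  apply/eqP => E; subst j; have [_ c2] := HC i; move: c2; rewrite /pendc Ei eqxx; lia.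
have Hle : (wsync (s i) j).+1 <= wsync (s i) i.
  have g1 := HA j i ji; have g2 := HA i j; rewrite eq_sym in g2; have g3 := Ei j.
  have g4 := g2 ji.
  rewrite /pendc /= eqxx in g1 g3 g4; lia.
split; [|split].
{ move=> a c ac; have h1 := HA a c ac; have h2 := HB a c; have h3 := HB i c; have h4 := Ei a.
  have h5 := Ei c.
  rewrite /pendc /= in h1 h2 h3.
  move: h1 h2 h3 h4 h5; rewrite /upd netc_cat /pendc /= ?count_cat /=; cases; rewrite ?count_cat /=; cases; intros; lia. }
{ move=> a c; have h2 := HB a c; have h3 := HB i c; rewrite /= in h2 h3.
  move: h2 h3; rewrite /upd /=; cases; intros; lia. }
{ move=> a; have [c1 c2] := HC a; have h4 := Ei a; rewrite /pendc /= in c1 c2.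
  move: c1 c2 h4; rewrite /upd netc_cat /pendc /= ?count_cat /=; cases; rewrite ?count_cat /=; cases; intros; lia. }
}
move: HI => [HA [HB HC]] /=; rewrite /ws1 /wsn /x in H H0 H1 H2 *; clear ws1 wsn x.
have Ei a : count (fun e : 'I_n * bool * V => e.1.1 == a) (wpend (s i)) =
   count (fun e : 'I_n * bool * V => e.1.1 == a) P1 + (j == a) +
   count (fun e : 'I_n * bool * V => e.1.1 == a) P2.
  by rewrite H0 count_cat /= addnA.
have ji : j != i.
  apply/eqP => E; subst j; have [_ c2] := HC i; move: c2; rewrite /pendc Ei eqxx; lia.
split; [|split].
{ move=> a c ac; have h1 := HA a c ac; have h2 := HB a c; have h3 := HB i c; have h4 := Ei a.
  have h5 := Ei c.
  rewrite /pendc /= in h1 h2 h3.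
  move: h1 h2 h3 h4 h5; rewrite /upd netc_cat netc_bcast /pendc /= ?count_cat /=; cases; rewrite ?count_cat /=; cases; intros; lia. }
{ move=> a c; have h2 := HB a c; have h3 := HB i c; rewrite /= in h2 h3.
  move: h2 h3; rewrite /upd /=; cases; rewrite ?count_cat /=; cases; intros; lia. }
{ move=> a; have [c1 c2] := HC a; have h4 := Ei a; rewrite /pendc /= in c1 c2.
  move: c1 c2 h4; rewrite /upd netc_cat netc_bcast /pendc /= ?count_cat /=; cases; rewrite ?count_cat /=; cases; intros; lia. }
Qed.
Lemma reach_inv v0' c : reachable t w v0' c -> Inv c.
Proof.
elim=> [|c1 c2 _ IH Hs]; last exact: step_inv IH Hs.
split; [|split] => //=; try by move=> a b _; rewrite /netc /pendc /=.
Qed.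
End S.
Unset Implicit Arguments.
Set Strict Implicit.

Theorem lemma2 (V : Type) (n t : nat) (w : 'I_n) (v0 : V) :
  t.*2 < n ->
  forall c : config V n,
    reachable t w v0 c ->
    forall i j : 'I_n, wsync (st c j) i <= wsync (st c i) i.
Proof.
move=> _ c Hc i j; have [HA _] := reach_inv Hc.
case: (eqVneq i j) => [->|ij]; first by [].
have := HA i j ij; lia.
Qed.
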